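(* Let $\mathbf M$ be endowed with a model category structure and a monoidal structure $(\otimes,I)$, with terminal object $e$. Let $C$ be a comonoid in $\mathbf M$ such that $\mathbf{Comod}_C$ admits pullbacks, let $U_C:\mathbf{Comod}_C\to\mathbf M$ be the forgetful functor, and let $\mathsf C=U_C^{-1}(\mathsf{Cof}_{\mathbf M})$. Let $\mathsf Z\subset\mathsf{Fib}_{\mathbf M}\cap\mathsf{WE}_{\mathbf M}$ be such that every morphism $f$ of $\mathbf M$ factors as $f=qj$ with $j\in\mathsf{Cof}_{\mathbf M}$ and $q\in\mathsf{Post}_{\mathsf Z}$. Assume: (1) for every right $C$-comodule $(M,\rho)$, the coaction $\rho:M\to M\otimes C$ is a cofibration in $\mathbf M$; (2) $-\otimes C:\mathbf M\to\mathbf M$ preserves weak equivalences and cofibrations; (3) for every $i:M\to N$ in $\mathsf C$ and every morphism $g:M\to N'$ in $\mathbf{Comod}_C$, the induced morphism $(i,g):M\to N\times N'$ lies in $\mathsf C$; (4) $\mathsf{Post}_{\mathsf Z}\otimes C\subset\mathsf{Post}_{\mathsf Z\otimes C}$. Then every morphism $f$ of $\mathbf{Comod}_C$ factors as $f=pi$ with $i\in\mathsf C$ and $p\in\mathsf{Post}_{\mathsf Z\otimes C}$.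
   Context: A comonoid $(C,\Delta,\varepsilon)$ in a monoidal category is an object with coassociative, counital comultiplication $\Delta:C\to C\otimes C$ and counit $\varepsilon:C\to I$. A right $C$-comodule is an object $M$ with a coassociative counital coaction $\rho:M\to M\otimes C$; $\mathbf{Comod}_C$ is the category of right $C$-comodules and coaction-preserving maps; $X\otimes C$ is the cofree comodule with coaction $X\otimes\Delta$, and $-\otimes C$ is right adjoint to $U_C$. For a set $\mathsf Y$ of morphisms of $\mathbf M$, $\mathsf Y\otimes C=\{y\otimes C:y\in\mathsf Y\}$ as maps of cofree comodules. Postnikov towers: for a set $\mathsf S$ of morphisms in a category, an $\mathsf S$-Postnikov tower is a morphism $\lim_{\beta<\lambda}Y_\beta\to Y_0$ (when the limit exists) for a functor $Y:\lambda^{op}\to$ (the category), $\lambda$ an ordinal, such that each $Y_{\beta+1}\to Y_\beta$ ($\beta+1<\lambda$) is a pullback of some element of $\mathsf S$ along some morphism $Y_\beta\to X_\beta$, and $Y_\gamma=\lim_{\beta<\gamma}Y_\beta$ for limit $\gamma<\lambda$; $\mathsf{Post}_{\mathsf S}$ is the set of these. *)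

(* Defs.v *)
From Stdlib Require Import ProofIrrelevance.
Set Implicit Arguments.
Unset Strict Implicit.

Record Category := {
  Ob :> Type;
  Hom : Ob -> Ob -> Type;
  idm : forall A, Hom A A;
  comp : forall A B C, Hom B C -> Hom A B -> Hom A C;
  comp_id_l : forall A B (f : Hom A B), comp (idm B) f = f;
  comp_id_r : forall A B (f : Hom A B), comp f (idm A) = f;
  comp_assoc : forall A B C D (h : Hom C D) (g : Hom B C) (f : Hom A B),
      comp h (comp g f) = comp (comp h g) f }.
Arguments Hom {K} A B : rename.
Arguments idm {K} A : rename.
Arguments comp {K A B C} g f : rename.
Notation "g ∘ f" := (comp g f) (at level 40, left associativity).

Definition MorClass (K : Category) := forall A B : K, Hom A B -> Prop.

Definition IsTerminal (K : Category) (T : K) :=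
  forall A : K, exists f : Hom A T, forall g : Hom A T, g = f.
Definition IsInitial (K : Category) (T : K) :=
  forall A : K, exists f : Hom T A, forall g : Hom T A, g = f.

Definition IsPullback (K : Category) (A B C P : K) (f : Hom A C) (g : Hom B C)
  (p1 : Hom P A) (p2 : Hom P B) :=
  f ∘ p1 = g ∘ p2 /\
  forall (Q : K) (q1 : Hom Q A) (q2 : Hom Q B), f ∘ q1 = g ∘ q2 ->
    exists u : Hom Q P, p1 ∘ u = q1 /\ p2 ∘ u = q2 /\
      forall v : Hom Q P, p1 ∘ v = q1 -> p2 ∘ v = q2 -> v = u.

Definition IsPushout (K : Category) (A B C P : K) (f : Hom C A) (g : Hom C B)
  (i1 : Hom A P) (i2 : Hom B P) :=
  i1 ∘ f = i2 ∘ g /\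
  forall (Q : K) (q1 : Hom A Q) (q2 : Hom B Q), q1 ∘ f = q2 ∘ g ->
    exists u : Hom P Q, u ∘ i1 = q1 /\ u ∘ i2 = q2 /\
      forall v : Hom P Q, v ∘ i1 = q1 -> v ∘ i2 = q2 -> v = u.

Definition IsProduct (K : Category) (A B P : K) (p1 : Hom P A) (p2 : Hom P B) :=
  forall (Q : K) (q1 : Hom Q A) (q2 : Hom Q B),
    exists u : Hom Q P, p1 ∘ u = q1 /\ p2 ∘ u = q2 /\
      forall v : Hom Q P, p1 ∘ v = q1 -> p2 ∘ v = q2 -> v = u.

Definition HasPullbacks (K : Category) :=
  forall (A B C : K) (f : Hom A C) (g : Hom B C),
    exists (P : K) (p1 : Hom P A) (p2 : Hom P B), IsPullback f g p1 p2.
Definition HasPushouts (K : Category) :=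
  forall (A B C : K) (f : Hom C A) (g : Hom C B),
    exists (P : K) (i1 : Hom A P) (i2 : Hom B P), IsPushout f g i1 i2.

Definition IsRetract (K : Category) (X Y A B : K) (g : Hom X Y) (f : Hom A B) :=
  exists (i : Hom X A) (r : Hom A X) (i' : Hom Y B) (r' : Hom B Y),
    r ∘ i = idm X /\ r' ∘ i' = idm Y /\ f ∘ i = i' ∘ g /\ g ∘ r = r' ∘ f.

Definition HasLLP (K : Category) (A B X Y : K) (i : Hom A B) (p : Hom X Y) :=
  forall (u : Hom A X) (v : Hom B Y), p ∘ u = v ∘ i ->
    exists h : Hom B X, h ∘ i = u /\ p ∘ h = v.

Record ModelStructure (K : Category) := {
  Cof : MorClass K;
  Fib : MorClass K;
  WE  : MorClass K;
  ms_terminal : exists T : K, IsTerminal T;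
  ms_initial : exists T : K, IsInitial T;
  ms_pullbacks : HasPullbacks K;
  ms_pushouts : HasPushouts K;
  ms_2of3 : forall (A B C : K) (f : Hom A B) (g : Hom B C),
      (WE f -> WE g -> WE (g ∘ f)) /\ (WE f -> WE (g ∘ f) -> WE g) /\
      (WE g -> WE (g ∘ f) -> WE f);
  ms_retract_cof : forall (X Y A B : K) (g : Hom X Y) (f : Hom A B),
      IsRetract g f -> Cof f -> Cof g;
  ms_retract_fib : forall (X Y A B : K) (g : Hom X Y) (f : Hom A B),
      IsRetract g f -> Fib f -> Fib g;
  ms_retract_we : forall (X Y A B : K) (g : Hom X Y) (f : Hom A B),
      IsRetract g f -> WE f -> WE g;
  ms_lift_acyclic_cof : forall (A B X Y : K) (i : Hom A B) (p : Hom X Y),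
      Cof i -> WE i -> Fib p -> HasLLP i p;
  ms_lift_acyclic_fib : forall (A B X Y : K) (i : Hom A B) (p : Hom X Y),
      Cof i -> Fib p -> WE p -> HasLLP i p;
  ms_fact_acyclic_cof : forall (A B : K) (f : Hom A B),
      exists (W : K) (i : Hom A W) (p : Hom W B),
        Cof i /\ WE i /\ Fib p /\ f = p ∘ i;
  ms_fact_acyclic_fib : forall (A B : K) (f : Hom A B),
      exists (W : K) (i : Hom A W) (p : Hom W B),
        Cof i /\ Fib p /\ WE p /\ f = p ∘ i }.
Arguments Cof {K} m {A B} f.
Arguments Fib {K} m {A B} f.
Arguments WE {K} m {A B} f.

Record Monoidal (K : Category) := {
  tens : K -> K -> K;
  tensm : forall A A' B B' : K, Hom A A' -> Hom B B' -> Hom (tens A B) (tens A' B');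
  tens_id : forall A B : K, tensm (idm A) (idm B) = idm (tens A B);
  tens_comp : forall (A A' A'' B B' B'' : K) (f : Hom A A') (f' : Hom A' A'')
      (g : Hom B B') (g' : Hom B' B''),
      tensm (f' ∘ f) (g' ∘ g) = tensm f' g' ∘ tensm f g;
  munit : K;
  assoc : forall A B C : K, Hom (tens (tens A B) C) (tens A (tens B C));
  assoc_inv : forall A B C : K, Hom (tens A (tens B C)) (tens (tens A B) C);
  assoc_inv_l : forall A B C : K, assoc_inv A B C ∘ assoc A B C = idm _;
  assoc_inv_r : forall A B C : K, assoc A B C ∘ assoc_inv A B C = idm _;
  assoc_nat : forall (A A' B B' C C' : K) (f : Hom A A') (g : Hom B B') (h : Hom C C'),
      assoc A' B' C' ∘ tensm (tensm f g) h = tensm f (tensm g h) ∘ assoc A B C;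
  lunit : forall A : K, Hom (tens munit A) A;
  lunit_inv : forall A : K, Hom A (tens munit A);
  lunit_inv_l : forall A : K, lunit_inv A ∘ lunit A = idm _;
  lunit_inv_r : forall A : K, lunit A ∘ lunit_inv A = idm _;
  lunit_nat : forall (A A' : K) (f : Hom A A'),
      lunit A' ∘ tensm (idm munit) f = f ∘ lunit A;
  runit : forall A : K, Hom (tens A munit) A;
  runit_inv : forall A : K, Hom A (tens A munit);
  runit_inv_l : forall A : K, runit_inv A ∘ runit A = idm _;
  runit_inv_r : forall A : K, runit A ∘ runit_inv A = idm _;
  runit_nat : forall (A A' : K) (f : Hom A A'),
      runit A' ∘ tensm f (idm munit) = f ∘ runit A;
  pentagon : forall A B C D : K,
      tensm (idm A) (assoc B C D) ∘ assoc A (tens B C) D ∘ tensm (assoc A B C) (idm D)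
      = assoc A B (tens C D) ∘ assoc (tens A B) C D;
  triangle : forall A B : K,
      tensm (idm A) (lunit B) ∘ assoc A munit B = tensm (runit A) (idm B);
  (* The following three coherence identities are consequences of the axioms
     above (Kelly 1964); they are recorded for convenience only. *)
  runit_tens : forall A B : K,
      runit (tens A B) = tensm (idm A) (runit B) ∘ assoc A B munit;
  lunit_tens : forall A B : K,
      lunit (tens A B) ∘ assoc munit A B = tensm (lunit A) (idm B);
  lunit_runit_unit : lunit munit = runit munit }.
Arguments tens {K} T A B : rename.
Arguments tensm {K} T {A A' B B'} f g : rename.
Arguments munit {K} T : rename.
Arguments assoc {K} T A B C : rename.
Arguments assoc_inv {K} T A B C : rename.
Arguments lunit {K} T A : rename.
Arguments runit {K} T A : rename.

Record Comonoid (K : Category) (T : Monoidal K) := {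
  cC : K;
  cDelta : Hom cC (tens T cC cC);
  cEps : Hom cC (munit T);
  c_coassoc : assoc T cC cC cC ∘ tensm T cDelta (idm cC) ∘ cDelta
              = tensm T (idm cC) cDelta ∘ cDelta;
  c_counit_l : lunit T cC ∘ tensm T cEps (idm cC) ∘ cDelta = idm cC;
  c_counit_r : runit T cC ∘ tensm T (idm cC) cEps ∘ cDelta = idm cC }.
Arguments cC {K T} c : rename.
Arguments cDelta {K T} c : rename.
Arguments cEps {K T} c : rename.

Section Comod.
Variables (K : Category) (T : Monoidal K) (C : Comonoid T).

Definition IsCoaction (M : K) (rho : Hom M (tens T M (cC C))) : Prop :=
  assoc T M (cC C) (cC C) ∘ tensm T rho (idm (cC C)) ∘ rho
    = tensm T (idm M) (cDelta C) ∘ rho /\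
  runit T M ∘ tensm T (idm M) (cEps C) ∘ rho = idm M.

Record Comodule := {
  cmObj : K;
  cmCoact : Hom cmObj (tens T cmObj (cC C));
  cmLaws : IsCoaction cmCoact }.

Definition ComodHom (M N : Comodule) :=
  { f : Hom (cmObj M) (cmObj N) |
    cmCoact N ∘ f = tensm T f (idm (cC C)) ∘ cmCoact M }.

Lemma tens_comp_idr (A B D : K) (f : Hom A B) (g : Hom B D) :
  tensm T (g ∘ f) (idm (cC C)) = tensm T g (idm (cC C)) ∘ tensm T f (idm (cC C)).
Proof. rewrite <- tens_comp. rewrite comp_id_l. reflexivity. Qed.

Definition comod_id (M : Comodule) : ComodHom M M.
Proof.
  exists (idm (cmObj M)). rewrite tens_id, comp_id_l, comp_id_r. reflexivity.
Defined.

Definition comod_comp (M N P : Comodule) (g : ComodHom N P) (f : ComodHom M N) :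
  ComodHom M P.
Proof.
  exists (proj1_sig g ∘ proj1_sig f).
  destruct g as [g hg], f as [f hf]; simpl.
  rewrite comp_assoc, hg, <- comp_assoc, hf, comp_assoc, tens_comp_idr.
  reflexivity.
Defined.

Lemma comod_hom_eq (M N : Comodule) (f g : ComodHom M N) :
  proj1_sig f = proj1_sig g -> f = g.
Proof. destruct f, g; simpl; intros; apply subset_eq_compat; assumption. Qed.

Definition ComodCat : Category.
Proof.
  refine {| Ob := Comodule; Hom := ComodHom; idm := comod_id;
            comp := comod_comp |}.
  - intros; apply comod_hom_eq; simpl; apply comp_id_l.
  - intros; apply comod_hom_eq; simpl; apply comp_id_r.
  - intros; apply comod_hom_eq; simpl; apply comp_assoc.
Defined.

Definition UC (M N : ComodCat) (f : @Hom ComodCat M N) : Hom (cmObj M) (cmObj N) :=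
  proj1_sig f.

Definition CofC (MS : ModelStructure K) : MorClass ComodCat :=
  fun M N f => Cof MS (UC f).

Definition cofree_coact (X : K) :
  Hom (tens T X (cC C)) (tens T (tens T X (cC C)) (cC C)) :=
  assoc_inv T X (cC C) (cC C) ∘ tensm T (idm X) (cDelta C).

(* the cofree comodule X ⊗ C (the coaction laws are supplied as a
   proof argument; they hold in any monoidal category) *)
Definition cofree (X : K) (pX : IsCoaction (cofree_coact X)) : ComodCat :=
  {| cmObj := tens T X (cC C); cmCoact := cofree_coact X; cmLaws := pX |}.

Inductive tensC (Y : MorClass K) : MorClass ComodCat :=
| tensC_intro : forall (X X' : K) (y : Hom X X')
    (pX : IsCoaction (cofree_coact X)) (pX' : IsCoaction (cofree_coact X'))
    (h : cofree_coact X' ∘ tensm T y (idm (cC C))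
         = tensm T (tensm T y (idm (cC C))) (idm (cC C)) ∘ cofree_coact X),
    Y X X' y ->
    tensC Y (A := cofree pX) (B := cofree pX')
      (exist _ (tensm T y (idm (cC C))) h : @Hom ComodCat (cofree pX) (cofree pX')).

End Comod.
Arguments Comodule {K T} C.
Arguments IsCoaction {K T} C {M} rho.
Arguments ComodCat {K T} C.
Arguments cofree {K T C X} pX.
Arguments cofree_coact {K T} C X.
Arguments CofC {K T C} MS [A B] f.
Arguments tensC {K T C} Y [A B] f.

Record WellOrder := {
  WO :> Type;
  wlt : WO -> WO -> Prop;
  wlt_trans : forall a b c, wlt a b -> wlt b c -> wlt a c;
  wlt_irrefl : forall a, ~ wlt a a;
  wlt_total : forall a b, wlt a b \/ a = b \/ wlt b a;
  wlt_wf : well_founded wlt;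
  wbot : WO;                       (* the element 0 (so λ > 0) *)
  wbot_least : forall a, a = wbot \/ wlt wbot a }.
Arguments wlt {w} a b : rename.
Arguments wbot {w} : rename.

Definition wle (L : WellOrder) (a b : L) := wlt a b \/ a = b.
Definition IsSucc (L : WellOrder) (b b' : L) :=
  wlt b b' /\ forall c, ~ (wlt b c /\ wlt c b').
Definition IsLimitOrd (L : WellOrder) (g : L) :=
  g <> wbot /\ forall c, wlt c g -> exists d, wlt c d /\ wlt d g.

(* a functor  λ^op -> K *)
Record Tower (K : Category) (L : WellOrder) := {
  Yo : L -> K;
  Ym : forall b b' : L, wle b b' -> Hom (Yo b') (Yo b);
  Ym_id : forall b (h : wle b b), Ym h = idm (Yo b);
  Ym_comp : forall b b' b'' (h : wle b b') (h' : wle b' b'') (h'' : wle b b''),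
      Ym h ∘ Ym h' = Ym h'' }.
Arguments Yo {K L} t b : rename.
Arguments Ym {K L} t {b b'} h : rename.

Definition IsLimitOver (K : Category) (L : WellOrder) (Y : Tower K L)
  (P : L -> Prop) (V : K) (pi : forall b, P b -> Hom V (Yo Y b)) :=
  (forall b b' (h : wle b b') (pb : P b) (pb' : P b'), Ym Y h ∘ pi b' pb' = pi b pb) /\
  forall (W : K) (q : forall b, P b -> Hom W (Yo Y b)),
    (forall b b' (h : wle b b') (pb : P b) (pb' : P b'), Ym Y h ∘ q b' pb' = q b pb) ->
    exists u : Hom W V, (forall b pb, pi b pb ∘ u = q b pb) /\
      forall v : Hom W V, (forall b pb, pi b pb ∘ v = q b pb) -> v = u.

Arguments IsLimitOver {K L} Y P V pi.

Definition PostCond (K : Category) (S : MorClass K) (L : WellOrder) (Y : Tower K L) :=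
  (forall (b b' : L) (h : wle b b'), IsSucc b b' ->
     exists (W X : K) (s : Hom W X) (g : Hom (Yo Y b) X) (t : Hom (Yo Y b') W),
       S W X s /\ IsPullback s g t (Ym Y h)) /\
  (forall g : L, IsLimitOrd g ->
     IsLimitOver Y (fun b => wlt b g) (Yo Y g)
       (fun b (pb : wlt b g) => Ym Y (b := b) (b' := g) (or_introl pb))).

Inductive Post (K : Category) (S : MorClass K) : MorClass K :=
| post_intro : forall (L : WellOrder) (Y : Tower K L) (V : K)
    (pi : forall b : L, True -> Hom V (Yo Y b)),
    IsLimitOver Y (fun _ => True) V pi -> PostCond S Y ->
    Post S (pi wbot I).
Arguments Post {K} S [A B] f.

(* Main.v *)
Require Import Defs.
From Stdlib Require Import ClassicalEpsilon ProofIrrelevance.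

Section Gen.
Variable K : Category.

Lemma pb_uniq (A B C P : K) (f : Hom A C) (g : Hom B C) (p1 : Hom P A) (p2 : Hom P B) :
  IsPullback f g p1 p2 -> forall Q (v w : Hom Q P), p1 ∘ v = p1 ∘ w -> p2 ∘ v = p2 ∘ w -> v = w.
Proof.
  intros [Hc Hu] Q v w E1 E2.
  destruct (Hu Q (p1 ∘ w) (p2 ∘ w)) as [u [_ [_ Hun]]].
  { rewrite !comp_assoc, Hc; reflexivity. }
  rewrite (Hun v E1 E2). symmetry. apply Hun; reflexivity.
Qed.

Arguments pb_uniq {A B C P f g p1 p2} _ {Q} v w.

Lemma h0 (L : WellOrder) (b : L) : wle wbot b.
Proof. destruct (wbot_least b) as [e|l]; [right; symmetry; exact e| left; exact l]. Qed.
Arguments h0 {L} b.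

Lemma Ym_irr (L : WellOrder) (Y : Tower K L) b b' (h h' : wle b b') : Ym Y h = Ym Y h'.
Proof. rewrite (proof_irrelevance _ h h'). reflexivity. Qed.

Lemma post_cast (S : MorClass K) (N : K) (R : forall P : K, Hom P N -> Type)
  (d : {P : K & {p1 : Hom P N & R P p1}}) r :
  d = existT _ N (existT _ (idm N) r) ->
  forall V' (x : Hom V' (projT1 d)), Post S x -> Post S (projT1 (projT2 d) ∘ x).
Proof. intros ->. simpl. intros. rewrite comp_id_l. assumption. Qed.

Section Tw.
Variables (S : MorClass K) (HPB : HasPullbacks K) (L : WellOrder) (Y : Tower K L)
  (N : K) (g : Hom N (Yo Y wbot)).

Definition DataT (b : L) := {P : K & {p1 : Hom P N & {p2 : Hom P (Yo Y b) |
   IsPullback g (Ym Y (h0 b)) p1 p2}}}.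

Lemma pb_id : IsPullback g (Ym Y (h0 wbot)) (idm N) g.
Proof.
  rewrite Ym_id. split.
  - rewrite comp_id_l, comp_id_r; reflexivity.
  - intros Q q1 q2 E. rewrite comp_id_l in E. exists q1. rewrite comp_id_l.
    split; [reflexivity|split; [exact E|]].
    intros v Hv _. rewrite comp_id_l in Hv. exact Hv.
Qed.

Definition base_data : DataT wbot :=
  existT _ N (existT _ (idm N) (exist _ g pb_id)).

Definition data (b : L) : DataT b.
Proof.
  destruct (excluded_middle_informative (b = wbot)) as [e|ne].
  - exact (eq_rect wbot DataT base_data b (eq_sym e)).
  - destruct (constructive_indefinite_description _ (HPB _ _ _ g (Ym Y (h0 b)))) as [P HP].
    destruct (constructive_indefinite_description _ HP) as [p1 HP1].
    destruct (constructive_indefinite_description _ HP1) as [p2 HP2].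
    exact (existT _ P (existT _ p1 (exist _ p2 HP2))).
Defined.

Lemma data_wbot : exists r, data wbot = existT _ N (existT _ (idm N) (exist _ g r)).
Proof.
  unfold data. destruct (excluded_middle_informative (wbot = wbot)) as [e|ne].
  - rewrite (proof_irrelevance _ e eq_refl). exists pb_id. reflexivity.
  - exfalso; apply ne; reflexivity.
Qed.

Definition Pb b := projT1 (data b).
Definition pa b : Hom (Pb b) N := projT1 (projT2 (data b)).
Definition pc b : Hom (Pb b) (Yo Y b) := proj1_sig (projT2 (projT2 (data b))).
Lemma Hpb b : IsPullback g (Ym Y (h0 b)) (pa b) (pc b).
Proof. exact (proj2_sig (projT2 (projT2 (data b)))). Qed.

Lemma Pb_uniq b Q (v w : Hom Q (Pb b)) : pa b ∘ v = pa b ∘ w -> pc b ∘ v = pc b ∘ w -> v = w.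
Proof. apply (pb_uniq (Hpb b)). Qed.

Lemma Ymap_ex b b' (h : wle b b') :
  {u : Hom (Pb b') (Pb b) | pa b ∘ u = pa b' /\ pc b ∘ u = Ym Y h ∘ pc b'}.
Proof.
  apply constructive_indefinite_description.
  destruct (proj2 (Hpb b) _ (pa b') (Ym Y h ∘ pc b')) as [u [E1 [E2 _]]].
  - rewrite (proj1 (Hpb b')), comp_assoc, (Ym_comp _ _ _ (h0 b')). reflexivity.
  - exists u; split; assumption.
Qed.

Arguments Ymap_ex {b b'} h.
Definition Ymap b b' (h : wle b b') : Hom (Pb b') (Pb b) := proj1_sig (Ymap_ex h).
Arguments Ymap {b b'} h.
Lemma Ymap_a b b' (h : wle b b') : pa b ∘ Ymap h = pa b'.
Proof. exact (proj1 (proj2_sig (Ymap_ex h))). Qed.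
Lemma Ymap_c b b' (h : wle b b') : pc b ∘ Ymap h = Ym Y h ∘ pc b'.
Proof. exact (proj2 (proj2_sig (Ymap_ex h))). Qed.

Lemma Ymap_id b (h : wle b b) : Ymap h = idm (Pb b).
Proof.
  apply Pb_uniq.
  - rewrite Ymap_a, comp_id_r; reflexivity.
  - rewrite Ymap_c, Ym_id, comp_id_l, comp_id_r; reflexivity.
Qed.

Lemma Ymap_comp b b' b'' (h : wle b b') (h' : wle b' b'') (h'' : wle b b'') :
  Ymap h ∘ Ymap h' = Ymap h''.
Proof.
  apply Pb_uniq.
  - rewrite comp_assoc, !Ymap_a; reflexivity.
  - rewrite comp_assoc, Ymap_c, <- comp_assoc, Ymap_c, comp_assoc, (Ym_comp _ _ _ h''), Ymap_c.
    reflexivity.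
Qed.

Definition Y' : Tower K L :=
  {| Yo := Pb; Ym := @Ymap; Ym_id := Ymap_id; Ym_comp := Ymap_comp |}.

Lemma LimPB (Pr : L -> Prop) (pw : Pr wbot) (V : K) (pi : forall b, Pr b -> Hom V (Yo Y b))
  (Hl : IsLimitOver Y Pr V pi) (V' : K) (aV : Hom V' N) (cV : Hom V' V)
  (Hp : IsPullback g (pi wbot pw) aV cV) (pi' : forall b, Pr b -> Hom V' (Pb b))
  (H1 : forall b pb, pa b ∘ pi' b pb = aV) (H2 : forall b pb, pc b ∘ pi' b pb = pi b pb ∘ cV) :
  IsLimitOver Y' Pr V' pi'.
Proof.
  destruct Hl as [Hc Hu]. split.
  - intros b b' h pb pb'. simpl. apply Pb_uniq.
    + rewrite comp_assoc, Ymap_a, !H1; reflexivity.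
    + rewrite comp_assoc, Ymap_c, <- comp_assoc, !H2, comp_assoc, (Hc b b' h pb pb').
      reflexivity.
  - intros W q Hq. simpl in Hq.
    set (x := pa wbot ∘ q wbot pw).
    assert (Hx : forall b pb, pa b ∘ q b pb = x).
    { intros b pb. unfold x. rewrite <- (Hq wbot b (h0 b) pw pb), comp_assoc, Ymap_a.
      reflexivity. }
    destruct (Hu W (fun b pb => pc b ∘ q b pb)) as [y [Hy Hyu]].
    { intros b b' h pb pb'. rewrite comp_assoc, <- Ymap_c, <- comp_assoc, (Hq b b' h pb pb'). reflexivity. }
    destruct (proj2 Hp W x y) as [u [Hu1 [Hu2 Huu]]].
    { unfold x. rewrite comp_assoc, (proj1 (Hpb wbot)), Ym_id, comp_id_l, Hy. reflexivity. }
    assert (Hpu : forall b pb, pi' b pb ∘ u = q b pb).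
    { intros b pb. apply Pb_uniq.
      - rewrite comp_assoc, H1, Hu1, Hx. reflexivity.
      - rewrite comp_assoc, H2, <- comp_assoc, Hu2, Hy. reflexivity. }
    exists u. split; [exact Hpu|].
    intros v Hv. apply (pb_uniq Hp).
    + rewrite Hu1, <- (H1 wbot pw), <- comp_assoc, Hv. reflexivity.
    + rewrite Hu2. apply Hyu. intros b pb.
      rewrite comp_assoc, <- H2, <- comp_assoc, Hv. reflexivity.
Qed.


Lemma tower_pb (V : K) (pi : forall b, True -> Hom V (Yo Y b))
  (Hl : IsLimitOver Y (fun _ => True) V pi) (HPC : PostCond S Y) :
  exists P (p : Hom P N) (p2 : Hom P V), IsPullback g (pi wbot I) p p2 /\ Post S p.
Proof.
  destruct (HPB _ _ _ g (pi wbot I)) as [V' [aV [cV Hp]]].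
  assert (X : forall b, {u : Hom V' (Pb b) | pa b ∘ u = aV /\ pc b ∘ u = pi b I ∘ cV}).
  { intro b. apply constructive_indefinite_description.
    destruct (proj2 (Hpb b) _ aV (pi b I ∘ cV)) as [u [E1 [E2 _]]].
    - rewrite (proj1 Hp), comp_assoc, (proj1 Hl wbot b (h0 b) I I). reflexivity.
    - exists u; split; assumption. }
  set (pi' := fun b (_ : True) => proj1_sig (X b)).
  assert (HL' : IsLimitOver Y' (fun _ => True) V' pi').
  { apply (@LimPB (fun _ => True) I _ _ Hl _ _ _ Hp).
    - intros b pb; exact (proj1 (proj2_sig (X b))).
    - intros b []; exact (proj2 (proj2_sig (X b))). }
  assert (HPC' : PostCond S Y').
  { destruct HPC as [Hs Hlo]. split.
    - intros b b' h Hsc. destruct (Hs b b' h Hsc) as [W [Xo [s [gg [t [HS Hsq]]]]]].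
      exists W, Xo, s, (gg ∘ pc b), (t ∘ pc b'). split; [exact HS|]. simpl. split.
      + rewrite comp_assoc, (proj1 Hsq), <- !comp_assoc, Ymap_c. reflexivity.
      + intros Q q1 q2 E.
        destruct (proj2 Hsq Q q1 (pc b ∘ q2)) as [z [Ez1 [Ez2 Ezu]]].
        { rewrite E, comp_assoc. reflexivity. }
        destruct (proj2 (Hpb b') Q (pa b ∘ q2) z) as [u [Eu1 [Eu2 Euu]]].
        { rewrite comp_assoc, (proj1 (Hpb b)), <- comp_assoc, <- Ez2, comp_assoc,
            (Ym_comp _ _ _ (h0 b')). reflexivity. }
        assert (Hu2 : Ymap h ∘ u = q2).
        { apply Pb_uniq.
          - rewrite comp_assoc, Ymap_a, Eu1. reflexivity.
          - rewrite comp_assoc, Ymap_c, <- comp_assoc, Eu2, Ez2. reflexivity. }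
        exists u. split; [rewrite <- comp_assoc, Eu2; exact Ez1|]. split; [exact Hu2|].
        intros v Hv1 Hv2. apply Pb_uniq.
        * rewrite Eu1, <- Hv2, comp_assoc, Ymap_a. reflexivity.
        * rewrite Eu2. apply Ezu.
          -- rewrite comp_assoc. exact Hv1.
          -- rewrite comp_assoc, <- Ymap_c, <- comp_assoc, Hv2. reflexivity.
    - intros gg Hg. assert (pw : wlt wbot gg).
      { destruct (wbot_least gg) as [e|l]; [exfalso; apply (proj1 Hg); exact e|exact l]. }
      apply (@LimPB (fun b => wlt b gg) pw _ _ (Hlo gg Hg) _ (pa gg) (pc gg)).
      + simpl. rewrite (Ym_irr _ _ _ _ _ (h0 gg)). apply Hpb.
      + intros b pb. simpl. apply Ymap_a.
      + intros b pb. simpl. apply Ymap_c. }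
  pose proof (post_intro HL' HPC') as HP.
  exists V', aV, cV. split; [exact Hp|].
  destruct data_wbot as [r Hr].
  pose proof (@post_cast S N (fun P p1 => {p2 : Hom P (Yo Y wbot) |
     IsPullback g (Ym Y (h0 wbot)) p1 p2}) (data wbot) _ Hr V' (pi' wbot I) HP) as HH.
  replace aV with (projT1 (projT2 (data wbot)) ∘ pi' wbot I); [exact HH|].
  exact (proj1 (proj2_sig (X wbot))).
Qed.

End Tw.

Lemma post_pullback (S : MorClass K) (HPB : HasPullbacks K) (A B : K) (q : Hom A B) :
  Post S q -> forall N (g : Hom N B),
  exists P (p : Hom P N) (p2 : Hom P A), IsPullback g q p p2 /\ Post S p.
Proof. intros Hq. destruct Hq as [L Y V pi Hl HPC]. intros N g. exact (@tower_pb S HPB L Y N g V pi Hl HPC). Qed.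

End Gen.
Section Gen2.
Variable K : Category.
Lemma pb_terminal_prod (Tm A B P : K) (f : Hom A Tm) (g : Hom B Tm) (p1 : Hom P A) (p2 : Hom P B) :
  IsTerminal Tm -> IsPullback f g p1 p2 -> IsProduct p2 p1.
Proof.
  intros HT Hp Q q1 q2.
  destruct (proj2 Hp Q q2 q1) as [u [E1 [E2 U]]].
  { destruct (HT Q) as [t Ht]. rewrite (Ht (f ∘ q2)), (Ht (g ∘ q1)). reflexivity. }
  exists u. split; [exact E2|split; [exact E1|]]. intros v Hv1 Hv2. exact (U v Hv2 Hv1).
Qed.

Lemma cof_comp (MS : ModelStructure K) (A B D : K) (i : Hom A B) (k : Hom B D) :
  Cof MS i -> Cof MS k -> Cof MS (k ∘ i).
Proof.
  intros Hi Hk.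
  destruct (ms_fact_acyclic_fib MS (k ∘ i)) as [W [c [p [Hc [Hpf [Hpw E]]]]]].
  assert (e1 : p ∘ c = k ∘ i) by (symmetry; exact E).
  destruct (ms_lift_acyclic_fib Hi Hpf Hpw e1) as [h [Eh1 Eh2]].
  assert (e2 : p ∘ h = idm D ∘ k) by (rewrite comp_id_l; exact Eh2).
  destruct (ms_lift_acyclic_fib Hk Hpf Hpw e2) as [h' [Eh1' Eh2']].
  refine (ms_retract_cof _ Hc).
  exists (idm A), (idm A), h', p. split; [apply comp_id_l|]. split; [exact Eh2'|].
  split.
  - rewrite comp_id_r, comp_assoc, Eh1', Eh1. reflexivity.
  - rewrite comp_id_r, E. reflexivity.
Qed.
End Gen2.

Lemma pair_rw (K : Category) (A B D E : K) (a : Hom B D) (b : Hom A B) (c : Hom A D) :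
  a ∘ b = c -> forall (y : Hom E A), a ∘ (b ∘ y) = c ∘ y.
Proof. intros H y. rewrite comp_assoc, H. reflexivity. Qed.

Arguments pair_rw {K A B D E a b c} _ {y}.

Ltac ra := repeat rewrite <- comp_assoc.

Section Mon.
Variables (K : Category) (T : Monoidal K).
Notation t := (tensm T).
Notation a := (assoc T).
Notation ai := (assoc_inv T).

Lemma ai_nat (A A' B B' D D' : K) (f : Hom A A') (g : Hom B B') (h : Hom D D') :
  t (t f g) h ∘ ai A B D = ai A' B' D' ∘ t f (t g h).
Proof.
  rewrite <- (comp_id_l (t (t f g) h ∘ ai A B D)), <- (assoc_inv_l T A' B' D').
  ra. rewrite (pair_rw (assoc_nat T f g h)), <- comp_assoc, assoc_inv_r, comp_id_r.
  reflexivity.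
Qed.

Arguments ai_nat {A A' B B' D D'} f g h.

Lemma tl (X A B D : K) (f : Hom B D) (g : Hom A B) : t (idm X) (f ∘ g) = t (idm X) f ∘ t (idm X) g.
Proof. rewrite <- tens_comp, comp_id_l. reflexivity. Qed.
Lemma tr (X A B D : K) (f : Hom B D) (g : Hom A B) : t (f ∘ g) (idm X) = t f (idm X) ∘ t g (idm X).
Proof. rewrite <- tens_comp, comp_id_l. reflexivity. Qed.
Lemma mix1 (A A' B B' : K) (f : Hom B B') (g : Hom A A') : t (idm A') f ∘ t g (idm B) = t g f.
Proof. rewrite <- tens_comp, comp_id_l, comp_id_r. reflexivity. Qed.
Lemma mix2 (A A' B B' : K) (f : Hom B B') (g : Hom A A') : t g (idm B') ∘ t (idm A) f = t g f.
Proof. rewrite <- tens_comp, comp_id_l, comp_id_r. reflexivity. Qed.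

Lemma pent_inv (A B C D : K) :
  a (tens T A B) C D ∘ (t (ai A B C) (idm D) ∘ ai A (tens T B C) D)
  = ai A B (tens T C D) ∘ t (idm A) (a B C D).
Proof.
  symmetry.
  transitivity (ai A B (tens T C D) ∘ t (idm A) (a B C D) ∘
     (a A (tens T B C) D ∘ (t (a A B C) (idm D) ∘ (t (ai A B C) (idm D) ∘ ai A (tens T B C) D)))).
  - rewrite (comp_assoc (t (a A B C) (idm D))), <- tr, assoc_inv_r, tens_id, comp_id_l,
      assoc_inv_r, comp_id_r. reflexivity.
  - ra. rewrite (comp_assoc (t (idm A) (a B C D))), (comp_assoc (t (idm A) (a B C D) ∘ _)).
    rewrite pentagon. ra. rewrite (comp_assoc (ai A B (tens T C D))), assoc_inv_l, comp_id_l.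
    reflexivity.
Qed.

Variable C : Comonoid T.
Notation c := (cC C).
Notation D := (cDelta C).
Notation E := (cEps C).

Lemma cofree_laws (X : K) : IsCoaction C (cofree_coact C X).
Proof.
  unfold cofree_coact. split.
  - ra. rewrite tr. ra. rewrite (pair_rw (ai_nat (idm X) D (idm c))).
    rewrite <- (tens_id T X c), (pair_rw (ai_nat (idm X) (idm c) D)).
    ra. rewrite <- (tl X _ _ _ (t (idm c) D) D), <- (c_coassoc C), !tl.
    ra. rewrite (comp_assoc (t (ai X c c) (idm c))), (pair_rw (pent_inv X c c c)). ra. reflexivity.
  - rewrite runit_tens, <- (tens_id T X c). ra.
    rewrite (pair_rw (ai_nat (idm X) (idm c) E)). ra.
    rewrite (pair_rw (assoc_inv_r T X c (munit T))).
    rewrite comp_id_l, <- (tl X _ _ _ (t (idm c) E) D), <- tl, comp_assoc, (c_counit_r C).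
    reflexivity.
Qed.

Lemma cofree_nat (X X' : K) (q : Hom X X') :
  cofree_coact C X' ∘ t q (idm c) = t (t q (idm c)) (idm c) ∘ cofree_coact C X.
Proof.
  unfold cofree_coact. ra. rewrite (pair_rw (ai_nat q (idm c) (idm c))), tens_id.
  ra. rewrite mix1, mix2. reflexivity.
Qed.

Lemma comod_map (M : Comodule C) (X : K) (u : Hom (cmObj M) X) (pX : IsCoaction C (cofree_coact C X)) :
  cmCoact (cofree pX) ∘ (t u (idm c) ∘ cmCoact M) = t (t u (idm c) ∘ cmCoact M) (idm c) ∘ cmCoact M.
Proof.
  simpl. rewrite comp_assoc, cofree_nat, tr. ra. f_equal.
  destruct (cmLaws M) as [L1 _]. unfold cofree_coact. ra. rewrite <- L1. ra.
  rewrite (pair_rw (assoc_inv_l T _ _ _)), comp_id_l. reflexivity.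
Qed.

Lemma cofree_counit (X : K) :
  t (runit T X) (idm c) ∘ (t (t (idm X) E) (idm c) ∘ (ai X c c ∘ t (idm X) D)) = idm (tens T X c).
Proof.
  rewrite (pair_rw (ai_nat (idm X) E (idm c))).
  assert (Htr : t (runit T X) (idm c) ∘ ai X (munit T) c = t (idm X) (lunit T c)).
  { rewrite <- triangle, <- comp_assoc, assoc_inv_r, comp_id_r. reflexivity. }
  ra. rewrite (pair_rw Htr).
  rewrite <- (tl X _ _ _ (t E (idm c)) D), <- tl, comp_assoc, (c_counit_l C), tens_id.
  reflexivity.
Qed.

Lemma cofree_univ (M : Comodule C) (X : K) (G0 : Hom (cmObj M) (tens T X c))
  (HG : cofree_coact C X ∘ G0 = t G0 (idm c) ∘ cmCoact M) :
  G0 = t (runit T X ∘ t (idm X) E ∘ G0) (idm c) ∘ cmCoact M.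
Proof.
  rewrite !tr. ra. rewrite <- HG. unfold cofree_coact. ra.
  transitivity (idm _ ∘ G0); [rewrite comp_id_l; reflexivity|].
  rewrite <- (cofree_counit X). ra. reflexivity.
Qed.

End Mon.

Lemma cofree_terminal (K : Category) (T : Monoidal K) (C : Comonoid T) (e : K)
  (he : IsTerminal e) (pe : IsCoaction C (cofree_coact C e)) :
  IsTerminal (K := ComodCat C) (cofree pe).
Proof.
  intros M. destruct (he (cmObj M)) as [m Hm].
  exists (exist _ (tensm T m (idm (cC C)) ∘ cmCoact M) (@comod_map K T C M e m pe)).
  intros [G0 HG]. apply comod_hom_eq. simpl. simpl in HG.
  rewrite <- (Hm (runit T e ∘ tensm T (idm e) (cEps C) ∘ G0)).
  apply (@cofree_univ K T C M e). exact HG.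
Qed.

Theorem mainTheorem2 (K : Category) (T : Monoidal K) (MS : ModelStructure K)
  (e : K) (he : IsTerminal e)
  (C : Comonoid T)
  (Hpb : HasPullbacks (ComodCat C))
  (Z : MorClass K)
  (HZ : forall (A B : K) (z : Hom A B), Z A B z -> Fib MS z /\ WE MS z)
  (Hfact : forall (A B : K) (f : Hom A B),
      exists (W : K) (j : Hom A W) (q : Hom W B), Cof MS j /\ Post Z q /\ f = q ∘ j)
  (H1 : forall M : Comodule C, Cof MS (cmCoact M))
  (H2 : forall (A B : K) (f : Hom A B),
      (WE MS f -> WE MS (tensm T f (idm (cC C)))) /\
      (Cof MS f -> Cof MS (tensm T f (idm (cC C)))))
  (H3 : forall (M N N' P : ComodCat C) (i : @Hom (ComodCat C) M N)
      (g : @Hom (ComodCat C) M N') (p1 : @Hom (ComodCat C) P N)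
      (p2 : @Hom (ComodCat C) P N') (u : @Hom (ComodCat C) M P),
      IsProduct p1 p2 -> p1 ∘ u = i -> p2 ∘ u = g ->
      CofC MS i -> CofC MS u)
  (H4 : forall (X X' : K) (q : Hom X X')
      (pX : IsCoaction C (cofree_coact C X)) (pX' : IsCoaction C (cofree_coact C X'))
      (h : cofree_coact C X' ∘ tensm T q (idm (cC C))
           = tensm T (tensm T q (idm (cC C))) (idm (cC C)) ∘ cofree_coact C X),
      Post Z q ->
      Post (tensC Z) (exist _ (tensm T q (idm (cC C))) h
                        : @Hom (ComodCat C) (cofree pX) (cofree pX'))) :
  forall (M N : ComodCat C) (f : @Hom (ComodCat C) M N),
    exists (P : ComodCat C) (i : @Hom (ComodCat C) M P) (p : @Hom (ComodCat C) P N),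
      CofC MS i /\ Post (tensC Z) p /\ f = p ∘ i.
Proof.
  intros M N f.
  destruct (he (cmObj M)) as [mM _].
  destruct (Hfact _ _ mM) as [W [j [q [Hj [Hq _]]]]].
  pose proof (@cofree_laws K T C W) as pW.
  pose proof (@cofree_laws K T C e) as pe.
  pose proof (H4 W e q pW pe (@cofree_nat K T C W e q) Hq) as HQ.
  destruct (he (cmObj N)) as [mN _].
  set (gN := exist _ (tensm T mN (idm (cC C)) ∘ cmCoact N) (@comod_map K T C N e mN pe)
             : @Hom (ComodCat C) N (cofree pe)).
  destruct (@post_pullback (ComodCat C) (tensC Z) Hpb _ _ _ HQ N gN) as [P [p [p2 [Hpbk HPp]]]].
  set (i0 := exist _ (tensm T j (idm (cC C)) ∘ cmCoact M) (@comod_map K T C M W j pW)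
             : @Hom (ComodCat C) M (cofree pW)).
  assert (Hi0 : CofC MS i0).
  { unfold CofC, UC. simpl. apply (@cof_comp K MS); [apply H1|apply H2; exact Hj]. }
  pose proof (@pb_terminal_prod (ComodCat C) _ _ _ _ _ _ _ _ (@cofree_terminal K T C e he pe) Hpbk) as Hprod.
  destruct (Hprod M i0 f) as [u [Eu1 [Eu2 _]]].
  exists P, u, p. split; [exact (H3 _ _ _ _ i0 f p2 p u Hprod Eu1 Eu2 Hi0)|].
  split; [exact HPp|]. symmetry; exact Eu2.
Qed.
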